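(* For every colored triangulation $(\tau,\xi)$ of $\boldsymbol{\Sigma}$ and for either choice $K=\mathbb{C}$ or $K=\mathbb{R}$, the quotient $K_{\boldsymbol{\sigma}}\widehat{Q}(\tau)/I(\tau,\xi)$, where $I(\tau,\xi)=\langle Z(\tau)\cup\{q_{s_j}\mid s_j\in\mathbb{S}(\tau)\}\rangle$, is a semilinear clannish algebra. That is, the data $(\widehat{Q}(\tau),\mathbb{S}(\tau),(\sigma_a)_a,Z(\tau),(q_{s_j})_j)$ satisfy: (i) at each vertex at most two arrows end and at most two arrows start; (ii) for each arrow $a:k\to j$ not in $\mathbb{S}(\tau)$, at most one arrow $b$ ending at $k$ has $ab\notin Z(\tau)$, and at most one arrow $b$ starting at $j$ has $ba\notin Z(\tau)$; (iii) no path in $Z(\tau)$ has a special loop as its first or last arrow; and each $q_{s_j}$ is a degree-$2$ skew polynomial.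
   Context: Let $\boldsymbol{\Sigma}=(\Sigma,\mathbb{M},\mathbb{O})$ be a surface with marked points and orbifold points: $\Sigma$ a compact connected oriented surface with possibly empty boundary, $\emptyset\neq\mathbb{M}\subseteq\Sigma$ a finite set of marked points meeting every boundary component, and $\mathbb{O}\subseteq\Sigma\setminus\partial\Sigma$ a finite set of orbifold points. Assume either ($\partial\Sigma\neq\emptyset$ and $\mathbb{M}\subseteq\partial\Sigma$) or ($\partial\Sigma=\emptyset$ and $|\mathbb{M}|=1$). Arcs join two points of $\mathbb{M}$ (non-pending) or a point of $\mathbb{M}$ to a point of $\mathbb{O}$ (pending); a triangulation $\tau$ is a maximal collection of pairwise compatible arcs. Let $X_0(\tau)=\tau$, $X_1(\tau)$ the set of arrows joining arcs clockwise inside the triangles of $\tau$, and $X_2(\tau)$ the set of $3$-cycles on $X_1(\tau)$ arising from triangles (up to rotation). A colored triangulation is a pair $(\tau,\xi)$ with $\xi=(\xi_a)_{a\in X_1(\tau)}\in\{0,1\}^{X_1(\tau)}$ such that $\xi_\alpha+\xi_\beta+\xi_\gamma\equiv 0 \pmod 2$ for every $\alpha\beta\gamma\in X_2(\tau)$. Semilinear clannish algebra: given a field $K$, a finite quiver $\widehat{Q}$, a set $\mathbb{S}$ of special loops, automorphisms $\sigma_a\in\operatorname{Aut}(K)$ for each arrow $a$, a set $Z$ of paths of length $\ge2$, and degree-$2$ polynomials $q_s\in K[s;\sigma_s]$ (skew-polynomial ring) for $s\in\mathbb{S}$, satisfying conditions (i)–(iii) above, the quotient $K_{\boldsymbol{\sigma}}\widehat{Q}/\langle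 Z\cup\{q_s\mid s\in\mathbb{S}\}\rangle$ is called semilinear clannish, where $K_{\boldsymbol{\sigma}}\widehat{Q}=T_S(\bigoplus_{a}K^{\sigma_a}\otimes_K K)$, $S=\times_{k\in\widehat{Q}_0}K$, and $K^{\sigma}$ is $K$ with left action $z*m=zm$ and right action $m*z=m\sigma(z)$. Construction: let $\theta$ be complex conjugation. $\widehat{Q}(\tau)$ is the quiver $(X_0(\tau),X_1(\tau))$ with a loop $s_j$ added at each pending arc $j$; $\mathbb{S}(\tau)=\{s_j\mid j \text{ pending}\}$; $\sigma_a=\theta^{\xi_a}|_K$ for $a\in X_1(\tau)$ and $\sigma_a=\theta|_K$ for $a\in\mathbb{S}(\tau)$; $Z(\tau)=\{\alpha\beta\mid \exists\gamma\in X_1(\tau),\ \alpha\beta\gamma\in X_2(\tau)\text{ up to rotation}\}$; $q_{s_j}=s_j^2-1\in\mathbb{C}[s_j;\theta]$ if $K=\mathbb{C}$ and $q_{s_j}=s_j^2+1\in\mathbb{R}[s_j;\mathrm{id}_{\mathbb{R}}]$ if $K=\mathbb{R}$. *)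

(* Defs.v *)
From HB Require Import structures.
From mathcomp Require Import all_boot all_order all_algebra.
From mathcomp Require Import complex.
From mathcomp Require Import Rstruct.

Set Implicit Arguments.
Unset Strict Implicit.
Unset Printing Implicit Defensive.

Import GRing.Theory.
Local Open Scope ring_scope.

(* Skew polynomials K[s; sigma], represented by their (left) coefficients.    *)
(* An element sum_i c_i s^i is stored as the coefficient polynomial; the ring *)
(* structure (s * c = sigma(c) * s) is irrelevant for the degree.             *)
Record skewpoly (K : fieldType) (sigma : K -> K) := SkewPoly {
  skew_coefs : {poly K} }.

Definition skew_deg (K : fieldType) (sigma : K -> K) (p : skewpoly sigma) : nat :=
  (size (skew_coefs p)).-1.

Definition is_field_aut (K : fieldType) (f : K -> K) : Prop :=
  [/\ {morph f : x y / x + y}, {morph f : x y / x * y}, f 1 = 1 & bijective f].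

(* Semilinear clannish data: quiver, special loops, automorphisms sigma_a,    *)
(* a set Z of paths (words of arrows; the word [:: a; b] stands for the path  *)
(* "ab", i.e. b followed by a, so that tgt b = src a), and polynomials q_s.    *)
Record sl_clannish_data (K : fieldType) := SLClannishData {
  sc_vert : finType;
  sc_arr : finType;
  sc_src : sc_arr -> sc_vert;
  sc_tgt : sc_arr -> sc_vert;
  sc_special : pred sc_arr;
  sc_sigma : sc_arr -> (K -> K);
  sc_Z : seq sc_arr -> Prop;
  sc_q : forall s : sc_arr, skewpoly (sc_sigma s) }.

Fixpoint is_path (V A : Type) (src tgt : A -> V) (w : seq A) : Prop :=
  match w with
  | [::] => True
  | a :: w' =>
      match w' with
      | [::] => True
      | b :: _ => tgt b = src a /\ is_path src tgt w'
      end
  end.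

Definition is_semilinear_clannish (K : fieldType) (D : sl_clannish_data K) : Prop :=
  let V := sc_vert D in let A := sc_arr D in
  let src := @sc_src K D in let tgt := @sc_tgt K D in
  let S := @sc_special K D in let Z := @sc_Z K D in
  (forall a : A, is_field_aut (sc_sigma a)) /\
  (forall s : A, S s -> src s = tgt s) /\
  (forall w, Z w -> (2 <= size w)%N /\ is_path src tgt w) /\
  (forall v : V, (#|[pred a : A | tgt a == v]| <= 2)%N /\
                 (#|[pred a : A | src a == v]| <= 2)%N) /\
  (forall a : A, ~~ S a ->
     (forall b b' : A, tgt b = src a -> tgt b' = src a ->
        ~ Z [:: a; b] -> ~ Z [:: a; b'] -> b = b') /\
     (forall b b' : A, src b = tgt a -> src b' = tgt a ->
        ~ Z [:: b; a] -> ~ Z [:: b'; a] -> b = b')) /\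
  (forall w, Z w -> forall x0 : A, ~~ S (head x0 w) /\ ~~ S (last x0 w)) /\
  (forall s : A, S s -> skew_deg (sc_q s) = 2%N).

(* Combinatorial model of a triangulation tau of Sigma:        *)
(* a finite set of arcs (some pending), a finite set of triangles, each with  *)
(* three sides listed in clockwise order; a side is an arc (Some x) or a      *)
(* boundary segment (None).  Gluing: every non-pending arc is a side of       *)
(* exactly two triangle-sides, every pending arc of exactly one.              *)
Record triangulation := Triangulation {
  tr_arc : finType;
  tr_pending : pred tr_arc;
  tr_tri : finType;
  tr_side : tr_tri -> 'I_3 -> option tr_arc }.

Definition triangulation_axiom (T : triangulation) : Prop :=
  forall x : tr_arc T,
    #|[pred c : tr_tri T * 'I_3 | tr_side c.1 c.2 == Some x]|
      = (if tr_pending x then 1 else 2)%N.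

(* X_1(tau): arrows inside triangles, from side i to the clockwise next side *)
Definition X1_ok (T : triangulation)
  (p : (tr_tri T * 'I_3) * (tr_arc T * tr_arc T)) : bool :=
  (tr_side p.1.1 p.1.2 == Some p.2.1) && (tr_side p.1.1 (ordS p.1.2) == Some p.2.2).

Definition X1 (T : triangulation) := {p : (tr_tri T * 'I_3) * (tr_arc T * tr_arc T) | X1_ok p}.

(* triangles all of whose sides are arcs: they give the 3-cycles of X_2(tau) *)
Definition full_tri (T : triangulation) (t : tr_tri T) : bool :=
  [forall i : 'I_3, tr_side t i != None].

(* pending arcs, indexing the special loops s_j *)
Definition pend_arc (T : triangulation) := {j : tr_arc T | tr_pending j}.

Definition Qarr (T : triangulation) := (X1 T + pend_arc T)%type.

Definition Qsrc (T : triangulation) (a : Qarr T) : tr_arc T :=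
  match a with inl p => (val p).2.1 | inr j => val j end.
Definition Qtgt (T : triangulation) (a : Qarr T) : tr_arc T :=
  match a with inl p => (val p).2.2 | inr j => val j end.
Definition Qspecial (T : triangulation) : pred (Qarr T) :=
  fun a => if a is inr _ then true else false.

Definition corner_of (T : triangulation) (a : Qarr T) : option (tr_tri T * 'I_3) :=
  match a with inl p => Some (val p).1 | inr _ => None end.

(* Z(tau): paths alpha beta of length 2 with alpha beta gamma in X_2(tau) up to
   rotation, i.e. two consecutive arrows inside a triangle all of whose sides
   are arcs. *)
Definition Ztau (T : triangulation) (w : seq (Qarr T)) : Prop :=
  exists (t : tr_tri T) (i : 'I_3), full_tri t /\
    map (@corner_of T) w = [:: Some (t, ordS i); Some (t, i)].

Definition is_coloring (T : triangulation) (xi : X1 T -> bool) : Prop :=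
  forall t : tr_tri T, full_tri t ->
    forall a b c : X1 T,
      (val a).1 = (t, 0%R) -> (val b).1 = (t, 1%R) -> (val c).1 = (t, 2%R) ->
      xi a (+) xi b (+) xi c = false.

Definition Qsigma (K : fieldType) (theta : K -> K) (T : triangulation)
  (xi : X1 T -> bool) (a : Qarr T) : K -> K :=
  match a with inl p => if xi p then theta else id | inr _ => theta end.

(* q_{s_j} = s_j^2 + c, and 0 (irrelevant) on non-special arrows *)
Definition Qq (K : fieldType) (theta : K -> K) (c : K) (T : triangulation)
  (xi : X1 T -> bool) (a : Qarr T) : skewpoly (Qsigma theta xi a) :=
  SkewPoly (Qsigma theta xi a)
    (match a with inl _ => 0 | inr _ => 'X^2 + c%:P end).

Definition clannish_data_of (K : fieldType) (theta : K -> K) (c : K)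
  (T : triangulation) (xi : X1 T -> bool) : sl_clannish_data K :=
  @SLClannishData K (tr_arc T) (Qarr T) (@Qsrc T) (@Qtgt T) (@Qspecial T)
    (Qsigma theta xi) (@Ztau T) (Qq theta c xi).

Definition RR : rcfType := Rdefinitions.R.
Definition CC : fieldType := (Rdefinitions.R)[i].
Definition conjCC : CC -> CC := @conjc Rdefinitions.R.

(* Main.v *)
Require Import Defs.
From mathcomp Require Import all_boot all_algebra.
From mathcomp Require Import complex.
From mathcomp Require Import Rstruct.
Local Open Scope ring_scope.
Import GRing.Theory.
Set Implicit Arguments.
Unset Strict Implicit.

Section Gen.

Lemma card_le2_three (U : finType) (A : pred U) x y z :
  (#|A| <= 2)%N -> x \in A -> y \in A -> z \in A -> x != y -> x != z -> y = z.
Proof.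
move=> hA hx hy hz nxy nxz; apply/eqP; apply/negPn/negP => nyz.
have : (size [:: x; y; z] <= size (enum A))%N.
  apply: uniq_leq_size; first by rewrite /= !inE negb_or nxy nxz nyz.
  by move=> u; rewrite !inE mem_enum => /or3P [] /eqP ->.
by rewrite -cardE /= => h; have := leq_trans h hA.
Qed.

Lemma card_le1_two (U : finType) (A : pred U) x y :
  (#|A| <= 1)%N -> x \in A -> y \in A -> x = y.
Proof.
move=> hA hx hy; apply/eqP; apply/negPn/negP => nxy.
have : (size [:: x; y] <= size (enum A))%N.
  apply: uniq_leq_size; first by rewrite /= !inE nxy.
  by move=> u; rewrite !inE mem_enum => /orP [] /eqP ->.
by rewrite -cardE /= => h; have := leq_trans h hA.
Qed.

Lemma card_three (U : finType) (A : pred U) :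
  (forall x y z, x \in A -> y \in A -> z \in A -> x != y -> x != z -> y != z -> False) ->
  (#|A| <= 2)%N.
Proof.
move=> H; rewrite cardE leqNgt; apply/negP => hs.
have hu := enum_uniq A.
case E: (enum A) hs hu => [|x [|y [|z s]]] //= _.
rewrite !inE !negb_or => /and4P [/and3P [nxy nxz _] /andP [nyz _] _ _].
by apply: (H x y z) => //; rewrite -(mem_enum A) E !inE eqxx ?orbT.
Qed.

Lemma ord3_cases (k i : 'I_3) : [|| k == i, k == ordS i | k == ordS (ordS i)].
Proof. by case: k => [[|[|[|//]]] ?]; case: i => [[|[|[|//]]] ?]. Qed.

Variable T : triangulation.
Hypothesis HT : triangulation_axiom T.

Definition Cv (v : tr_arc T) := [pred c : tr_tri T * 'I_3 | tr_side c.1 c.2 == Some v].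

Lemma Cv_le2 v : (#|Cv v| <= 2)%N.
Proof. by rewrite /Cv HT; case: tr_pending. Qed.

Lemma Cv_pend v : tr_pending v -> (#|Cv v| <= 1)%N.
Proof. by move=> h; rewrite /Cv HT h. Qed.

Lemma X1_inj (p q : X1 T) : (val p).1 = (val q).1 -> p = q.
Proof.
case: p => [[c [x y]] Hp]; case: q => [[c' [x' y']] Hq] /= e; subst c'.
apply: val_inj => /=.
move: Hp Hq; rewrite /X1_ok /= => /andP [/eqP h1 /eqP h2] /andP [/eqP h1' /eqP h2'].
by move: h1'; rewrite h1 => -[->]; move: h2'; rewrite h2 => -[->].
Qed.

Section Endpoint.
Variable e : Qarr T -> tr_arc T.
Variable cor : X1 T -> tr_tri T * 'I_3.
Hypothesis cor_inj : injective cor.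
Hypothesis cor_side : forall p, tr_side (cor p).1 (cor p).2 = Some (e (inl p)).
Hypothesis e_inr : forall j, e (inr j) = val j.

Lemma cor_in p v : e (inl p) = v -> cor p \in Cv v.
Proof. by move=> <-; rewrite inE cor_side. Qed.

Lemma G1 v : (#|[pred a | e a == v]| <= 2)%N.
Proof.
apply: card_three => x y z; rewrite !inE => /eqP hx /eqP hy /eqP hz.
have inr_uniq : forall j j', e (inr j) = v -> e (inr j') = v -> inr j = inr j' :> Qarr T.
  by move=> j j'; rewrite !e_inr => h h'; congr inr; apply: val_inj; rewrite h h'.
have inl_inr : forall j p q, e (inr j) = v -> e (inl p) = v -> e (inl q) = v -> p = q.
  move=> j p q hj hp hq; apply: cor_inj.
  apply: (card_le1_two (Cv_pend _)) (cor_in hp) (cor_in hq).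
  by rewrite -hj e_inr (valP j).
case: x hx => [p|j] hx; case: y hy => [q|j'] hy; case: z hz => [r|j''] hz.
- move=> npq npr nqr; move/negP: nqr; apply; apply/eqP; congr inl; apply: cor_inj.
  apply: (card_le2_three (Cv_le2 v) (cor_in hx) (cor_in hy) (cor_in hz)).
    by apply: contra npq => /eqP /cor_inj ->.
  by apply: contra npr => /eqP /cor_inj ->.
- by rewrite (inl_inr _ _ _ hz hx hy) eqxx.
- by rewrite (inl_inr _ _ _ hy hx hz) eqxx.
- by rewrite (inr_uniq _ _ hy hz) eqxx.
- by rewrite (inl_inr _ _ _ hx hy hz) eqxx.
- by rewrite (inr_uniq _ _ hx hz) eqxx.
- by rewrite (inr_uniq _ _ hx hy) eqxx.
- by rewrite (inr_uniq _ _ hx hy) eqxx.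
Qed.

Lemma G2 x0 v : tr_side x0.1 x0.2 = Some v ->
  forall b b', e b = v -> e b' = v ->
  (forall q, b = inl q -> cor q != x0) -> (forall q, b' = inl q -> cor q != x0) -> b = b'.
Proof.
move=> hx0 b b' hb hb' nb nb'.
have x0in : x0 \in Cv v by rewrite inE hx0.
case: b hb nb => [q|j] hb nb; case: b' hb' nb' => [q'|j'] hb' nb'.
- congr inl; apply: cor_inj.
  apply: (card_le2_three (Cv_le2 v) x0in (cor_in hb) (cor_in hb')).
    by rewrite eq_sym (nb q).
  by rewrite eq_sym (nb' q').
- have hp : tr_pending v by rewrite -hb' e_inr (valP j').
  by have := card_le1_two (Cv_pend hp) x0in (cor_in hb); move/eqP: (nb q erefl) => /[swap] <-.
- have hp : tr_pending v by rewrite -hb e_inr (valP j).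
  by have := card_le1_two (Cv_pend hp) x0in (cor_in hb'); move/eqP: (nb' q' erefl) => /[swap] <-.
- by congr inr; apply: val_inj; rewrite -!e_inr hb hb'.
Qed.

End Endpoint.

Definition tcor (p : X1 T) : tr_tri T * 'I_3 := ((val p).1.1, ordS (val p).1.2).

Lemma tcor_inj : injective tcor.
Proof.
move=> p q E; apply: X1_inj.
have e1 : (val p).1.1 = (val q).1.1 := f_equal (fun c => c.1) E.
have e2 : ordS (val p).1.2 = ordS (val q).1.2 := f_equal (fun c => c.2) E.
by move: e1 (ordS_inj e2); case: (val p).1; case: (val q).1 => /= ? ? ? ? -> ->.
Qed.

Lemma tcor_side p : tr_side (tcor p).1 (tcor p).2 = Some (Qtgt (inl p)).
Proof. by case: p => [[[t i] [x y]] H] /=; case/andP: H => _ /eqP. Qed.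

Lemma scor_side (p : X1 T) : tr_side (val p).1.1 (val p).1.2 = Some (Qsrc (inl p)).
Proof. by case: p => [[[t i] [x y]] H] /=; case/andP: H => /eqP. Qed.

Lemma scor_inj : injective (fun p : X1 T => (val p).1).
Proof. by move=> p q; apply: X1_inj. Qed.

Lemma full_of (t : tr_tri T) (i : 'I_3) :
  tr_side t i != None -> tr_side t (ordS i) != None -> tr_side t (ordS (ordS i)) != None ->
  full_tri t.
Proof.
move=> h1 h2 h3; apply/forallP => k.
by case/or3P: (ord3_cases k i) => /eqP ->.
Qed.

Lemma Zmk (p q : X1 T) : tcor q = (val p).1 -> Ztau [:: inl p; inl q].
Proof.
move=> E; exists (val q).1.1, (val q).1.2; split; last first.
  by rewrite /= -E /tcor -surjective_pairing.
apply: (@full_of _ (val q).1.2).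
- by have := scor_side q; rewrite /= => ->.
- by have := tcor_side q; rewrite /tcor /= => ->.
- have := tcor_side p; rewrite /tcor /= -E /= => -> //.
Qed.

End Gen.

Lemma id_aut (K : fieldType) : is_field_aut (@id K).
Proof. by split=> //; exists id. Qed.

Lemma gen (K : fieldType) (theta : K -> K) (c : K) (T : triangulation) (xi : X1 T -> bool) :
  is_field_aut theta -> triangulation_axiom T ->
  is_semilinear_clannish (clannish_data_of theta c xi).
Proof.
move=> Hth HT; rewrite /is_semilinear_clannish /=.
split; first by case=> [p|j] /=; [case: (xi p) => //; apply: id_aut|].
split; first by case.
split.
  move=> w [t [i [_]]].
  case: w => [|a [|b [|? ?]]] //=; case: a => [p|?] //; case: b => [q|?] //= [ep eq].
  split => //; split => //.
  have h1 := tcor_side q; have h2 := scor_side p.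
  rewrite /tcor /= eq /= in h1; rewrite /= ep /= in h2.
  by move: h1; rewrite h2 => -[].
split.
  move=> v; split.
    by apply: (G1 HT (@tcor_inj T) (@tcor_side T)).
  by apply: (G1 HT (@scor_inj T) (@scor_side T)).
split.
  case=> [p|//] _; split.
  - move=> b b' hb hb' nz nz'.
    apply: (G2 HT (@tcor_inj T) (@tcor_side T) (fun _ => erefl) (x0 := (val p).1) (scor_side p) hb hb').
    + by move=> q E; apply/eqP => hq; apply: nz; rewrite E; apply: Zmk.
    + by move=> q E; apply/eqP => hq; apply: nz'; rewrite E; apply: Zmk.
  - move=> b b' hb hb' nz nz'.
    apply: (G2 HT (@scor_inj T) (@scor_side T) (fun _ => erefl) (x0 := tcor p) (tcor_side p) hb hb').
    + by move=> q E; apply/eqP => hq; apply: nz; rewrite E; apply: Zmk.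
    + by move=> q E; apply/eqP => hq; apply: nz'; rewrite E; apply: Zmk.
split.
  move=> w [t [i [_]]].
  case: w => [|a [|b [|? ?]]] //=; case: a => [p|?] //; case: b => [q|?] //=.
by case=> // j _; rewrite /skew_deg /= size_XnaddC.
Qed.

Lemma conj_aut : is_field_aut conjCC.
Proof.
split.
- move=> x y. exact: (rmorphD (@conjc Rdefinitions.R)).
- by move=> x y; exact: (rmorphM (@conjc Rdefinitions.R)).
- exact: (rmorph1 (@conjc Rdefinitions.R)).
- by exists conjCC => x; exact: conjcK.
Qed.

Theorem mainTheorem1 :
  forall (T : triangulation) (xi : X1 T -> bool),
    triangulation_axiom T -> is_coloring xi ->
    is_semilinear_clannish (clannish_data_of conjCC (-1) xi) /\
    is_semilinear_clannish (clannish_data_of (@id RR) 1 xi).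
Proof.
move=> T xi HT _; split; apply: gen => //; [exact: conj_aut | exact: id_aut].
Qed.
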